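(* Let $n\ge4$ be even. Let $G$ have node set $V_1\cup V_2\cup\{v\}$ with $|V_1|=n/2$, $|V_2|=n/2-1$ (disjoint, not containing $v$), and edge set $\{(x,y):x\in V_1,\ y\in V_2\cup\{v\}\}$. Consider the \textsc{Random Pick} process on $G$ from the initial state in which only $v$ is colored. Then with probability $1-o(1)$ as $n\to\infty$, the convergence time exceeds $\frac18 n\log_2 n$. (Here $\Delta_+(G)=n/2$ and $D(G)=1$.)
   Context: A state is a map $V\to\{b,r,u\}$ (blue, red, uncolored); colored means blue or red. \textsc{Random Pick} process: in each round $t$ every node $x$ with at least one out-neighbor picks an out-neighbor $ps_t(x)$ uniformly at random, independently; an uncolored node adopts the color of its pick if the pick is colored, and all other nodes keep their color. A state is stable if no uncolored node has a colored out-neighbor; the convergence time is the first round $t\ge0$ at which the state is stable. *)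

(* Defs.v *)
From Stdlib Require Import Reals.
From mathcomp Require Import all_boot.

Set Implicit Arguments.
Unset Strict Implicit.
Unset Printing Implicit Defensive.

Inductive color := Blue | Red | Unc.

Definition colored (c : color) : bool :=
  match c with Unc => false | _ => true end.

Section RandomPick.
Variable V : finType.
Variable e : rel V.  (* e x y : y is an out-neighbor of x *)

Definition has_out (x : V) : bool := [exists y, e x y].

(* A pick assignment for one round: every node with an out-neighbor picks one
   of its out-neighbors; nodes without out-neighbors pick nothing (encoded as
   the dummy value x itself). Uniform counting over valid picks = independent
   uniform choices at every node. *)
Definition valid_pick (p : {ffun V -> V}) : bool :=
  [forall x, if has_out x then e x (p x) else p x == x].

Definition step (s : V -> color) (p : V -> V) : V -> color :=
  fun x => if (~~ colored (s x)) && has_out x && colored (s (p x))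
           then s (p x) else s x.

Fixpoint run (f : nat -> V -> V) (s0 : V -> color) (t : nat) : V -> color :=
  match t with
  | 0 => s0
  | t'.+1 => step (run f s0 t') (f t')
  end.

Definition stable (s : V -> color) : bool :=
  [forall x, [forall y, (~~ colored (s x)) && e x y ==> ~~ colored (s y)]].

Definition picks_of (T : nat) (ps : {ffun 'I_T -> {ffun V -> V}}) : nat -> V -> V :=
  fun k => match insub k with Some i => ps i | None => (fun x => x) end.

Definition valid_run (T : nat) (ps : {ffun 'I_T -> {ffun V -> V}}) : bool :=
  [forall i, valid_pick (ps i)].

(* Convergence time > T (T : nat): the states at rounds 0, ..., T are all unstable.
   This event depends only on the picks of rounds 1..T. *)
Definition exceeds (s0 : V -> color) (T : nat) (ps : {ffun 'I_T -> {ffun V -> V}}) : bool :=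
  [forall t : 'I_T.+1, ~~ stable (run (picks_of ps) s0 t)].

Definition prob_exceeds (s0 : V -> color) (T : nat) : R :=
  Rdiv (INR #|[pred ps : {ffun 'I_T -> {ffun V -> V}} | valid_run ps && exceeds s0 ps]|)
       (INR #|[pred ps : {ffun 'I_T -> {ffun V -> V}} | valid_run ps]|).

End RandomPick.

(* The graph of the theorem on node set 'I_n:
   V1 = {0, ..., n/2 - 1}, V2 = {n/2, ..., n-2}, v = n-1;
   edges (x,y) with x in V1 and y in V2 ∪ {v}. *)
Definition gedge (n : nat) : rel 'I_n :=
  fun x y => (x < n./2) && (n./2 <= y).

Definition init (n : nat) (c : color) : 'I_n -> color :=
  fun x => if val x == n.-1 then c else Unc.

Definition threshold (n : nat) : nat :=
  Z.to_nat (Int_part (Rdiv (Rmult (INR n) (Rdiv (ln (INR n)) (ln (INR 2)))) (INR 8))).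

Arguments gedge n : clear implicits.
Arguments init n c : clear implicits.

(* Main.v *)
Require Import Defs.
From Stdlib Require Import Reals ZArith Lra.
From mathcomp Require Import all_boot zify.

Lemma card_forall (A B : finType) (P : A -> pred B) :
  #|[pred f : {ffun A -> B} | [forall x, P x (f x)]]| = \prod_x #|P x|.
Proof.
rewrite -(@eq_card _ (family P)); last first.
  by move=> f; rewrite !inE; apply/familyP/forallP.
by rewrite card_family foldrE big_map big_enum.
Qed.

Lemma card_lt n m : m <= n -> #|[pred y : 'I_n | y < m]| = m.
Proof.
move=> h; rewrite -sum1_card.
rewrite (eq_bigl (fun i : 'I_n => i < m)) //.
by rewrite -(big_ord_widen _ (fun _ => 1)) // sum1_card card_ord.
Qed.

Lemma prod_cond n m K : m <= n ->
  \prod_(x < n) (if x < m then K else 1) = K ^ m.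
Proof.
move=> h; rewrite -big_mkcond /= -(big_ord_widen _ (fun _ => K)) //.
by rewrite prod_nat_const card_ord.
Qed.

Lemma card_ge n m : m <= n -> #|[pred y : 'I_n | m <= y]| = n - m.
Proof.
move=> h; have H := cardC [pred y : 'I_n | y < m].
rewrite card_ord card_lt // in H.
rewrite -(@eq_card _ [predC [pred y : 'I_n | y < m]]); last first. by move=> y; rewrite !inE ltnNge negbK.
by apply/eqP; rewrite -(eqn_add2l m) H subnKC.
Qed.

Arguments card_forall {A B} P.
Definition tr {A B C : finType} (ps : {ffun A -> {ffun B -> C}}) : {ffun B -> {ffun A -> C}} :=
  [ffun x => [ffun i => ps i x]].

Lemma card_tr (A B C : finType) (Q : pred {ffun B -> {ffun A -> C}}) :
  #|[pred ps : {ffun A -> {ffun B -> C}} | Q (tr ps)]| = #|Q|.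
Proof.
have trK : cancel (@tr A B C) (@tr B A C).
  by move=> ps; apply/ffunP=> i; apply/ffunP=> x; rewrite !ffunE.
have trK' : cancel (@tr B A C) (@tr A B C).
  by move=> ps; apply/ffunP=> i; apply/ffunP=> x; rewrite !ffunE.
rewrite -(card_image (can_inj trK)); apply: eq_card => g; apply/imageP/idP.
  by move=> [ps Hps ->]; rewrite inE in Hps.
by move=> Hg; exists (tr g); rewrite ?inE trK'.
Qed.

Arguments card_tr {A B C} Q.
Section G.
Variables (c : color) (hc : colored c) (n : nat) (hn : 2 <= n) (hm : n = n./2 + n./2).
Local Notation m := n./2.

Lemma has_out_g (x : 'I_n) : has_out (gedge n) x = (x < m).
Proof.
apply/existsP/idP => [[y /andP[] //]|].
have hv : n.-1 < n by lia.
by move=> h; exists (Ordinal hv); rewrite /gedge h /=; lia.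
Qed.

Variable T : nat.
Implicit Type ps : {ffun 'I_T -> {ffun 'I_n -> 'I_n}}.

Lemma run_unc ps t (y : 'I_n) : m <= y -> val y != n.-1 ->
  run (gedge n) (picks_of ps) (init n c) t y = Unc.
Proof.
move=> h1 h2; elim: t => [|t IH] /=; first by rewrite /init (negbTE h2).
by rewrite /step IH has_out_g ltnNge h1.
Qed.

Lemma run_v ps t (y : 'I_n) : val y = n.-1 ->
  run (gedge n) (picks_of ps) (init n c) t y = c.
Proof.
move=> h; elim: t => [|t IH] /=; first by rewrite /init h eqxx.
by rewrite /step IH has_out_g h hc.
Qed.

Definition Fx (x : 'I_n) : pred 'I_n := fun y => if x < m then m <= y else y == x.

Lemma valid_pickE (p : {ffun 'I_n -> 'I_n}) :
  valid_pick (gedge n) p = [forall x, Fx x (p x)].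
Proof.
apply: eq_forallb => x; rewrite has_out_g /Fx /gedge.
by case: (x < m).
Qed.

Lemma run_col ps : valid_run (gedge n) ps -> forall t, t <= T -> forall x : 'I_n, x < m ->
  colored (run (gedge n) (picks_of ps) (init n c) t x) ->
  exists i : 'I_T, val (ps i x) == n.-1.
Proof.
move=> hv; elim=> [|t IH] ht x hx /=.
  by rewrite /init /= ifN // neq_ltn; apply/orP; left; lia.
case hcx: (colored (run (gedge n) (picks_of ps) (init n c) t x)).
  by move=> _; apply: IH => //; lia.
have htT : t < T by [].
have -> : picks_of ps t = ps (Ordinal htT) by rewrite /picks_of insubT.
rewrite /step hcx has_out_g hx /=.
have := forallP hv (Ordinal htT); rewrite valid_pickE => /forallP /(_ x).
rewrite /Fx hx => hge.
case: (eqVneq (val (ps (Ordinal htT) x)) n.-1) => [e|ne].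
  by move=> _; exists (Ordinal htT); rewrite e.
by rewrite run_unc // hcx.
Qed.

Lemma bad_cov ps : valid_run (gedge n) ps -> ~~ exceeds (gedge n) (init n c) ps ->
  forall x : 'I_n, x < m -> exists i : 'I_T, val (ps i x) == n.-1.
Proof.
move=> hv; rewrite /exceeds negb_forall => /existsP [t]; rewrite negbK => /forallP hs x hx.
have hvn : n.-1 < n by lia.
have := forallP (hs x) (Ordinal hvn).
rewrite [run _ _ _ _ (Ordinal hvn)]run_v // hc implybF negb_and negbK => /orP [hcol|]; last by rewrite /gedge hx /=; lia.
have ht : t <= T by have := ltn_ord t; lia.
exact: (@run_col ps hv t ht x hx hcol).
Qed.

Definition Gx (x : 'I_n) : pred {ffun 'I_T -> 'I_n} := [pred u : {ffun 'I_T -> 'I_n} | [forall i, Fx x (u i)]].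
Definition Gc (x : 'I_n) : pred {ffun 'I_T -> 'I_n} :=
  [pred u : {ffun 'I_T -> 'I_n} | [forall i, Fx x (u i)] && ((x < m) ==> [exists i, (u i : nat) == n.-1])].

Lemma card_Fx x : #|Fx x| = if x < m then m else 1.
Proof.
case hx: (x < m).
  rewrite (@eq_card _ _ [pred y : 'I_n | m <= y]) ?card_ge; first lia.
    lia.
  by move=> y; rewrite /Fx hx inE.
by rewrite (@eq_card _ _ (pred1 x)) ?card1 // => y; rewrite /Fx hx inE.
Qed.

Lemma card_Gx x : #|Gx x| = if x < m then m ^ T else 1.
Proof.
rewrite /Gx (card_forall (fun (_ : 'I_T) => Fx x)) prod_nat_const card_ord card_Fx.
by case: (x < m); rewrite ?exp1n.
Qed.

Lemma card_Gc x : #|Gc x| = if x < m then m ^ T - (m - 1) ^ T else 1.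
Proof.
case hx: (x < m); last first.
  by have := card_Gx x; rewrite hx => <-; apply: eq_card => u; rewrite /Gc /Gx !inE hx andbT.
set B : pred {ffun 'I_T -> 'I_n} := [pred u : {ffun 'I_T -> 'I_n} | [exists i, (u i : nat) == n.-1]].
have e0 := cardID B (Gx x).
have e1 : #|Gc x| = #|[predI Gx x & B]|.
  by apply: eq_card => u; rewrite /Gc /Gx !inE hx.
set F' : pred 'I_n := fun y => (m <= y) && ((y : nat) != n.-1).
have e2 : #|[predD Gx x & B]| = #|[pred u : {ffun 'I_T -> 'I_n} | [forall i, F' (u i)]]|.
  apply: eq_card => u; rewrite !inE /B negb_exists /Fx hx.
  apply/andP/forallP => [[/forallP h1 /forallP h2] i|h]; first by rewrite /F' h1 h2.
  by split; apply/forallP => i; have := h i; rewrite /F' => /andP[].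
have hvn : n.-1 < n by lia.
have e3 : #|F'| = m - 1.
  have := cardD1 (Ordinal hvn) [pred y : 'I_n | m <= y].
  rewrite card_ge ?inE /=; last by lia.
  have -> : m <= n.-1 by lia.
  have -> : #|[predD1 [pred y : 'I_n | m <= y] & Ordinal hvn]| = #|F'|.
    by apply: eq_card => y; rewrite !inE /F' andbC.
  lia.
rewrite (card_forall (fun (_ : 'I_T) => F')) prod_nat_const card_ord e3 in e2.
rewrite card_Gx hx in e0.
by rewrite e1 -e0 e2 addnK.
Qed.

Lemma validE ps : valid_run (gedge n) ps = [forall x, Gx x (tr ps x)].
Proof.
apply/forallP/forallP => h.
  move=> x; apply/forallP => i; rewrite !ffunE.
  by have := h i; rewrite valid_pickE => /forallP.
move=> i; rewrite valid_pickE; apply/forallP => x.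
by have := h x; move=> /forallP /(_ i); rewrite !ffunE.
Qed.

Lemma total_card : #|[pred ps : {ffun 'I_T -> {ffun 'I_n -> 'I_n}} | valid_run (gedge n) ps]| = (m ^ T) ^ m.
Proof.
rewrite (@eq_card _ _ [pred ps : {ffun 'I_T -> {ffun 'I_n -> 'I_n}} | [pred g : {ffun 'I_n -> {ffun 'I_T -> 'I_n}} | [forall x, Gx x (g x)]] (tr ps)]); last first.
  by move=> ps; rewrite !inE validE.
rewrite card_tr card_forall (eq_bigr _ (fun x _ => card_Gx x)).
apply: prod_cond; lia.
Qed.

Lemma bad_card : #|[pred ps : {ffun 'I_T -> {ffun 'I_n -> 'I_n}} | valid_run (gedge n) ps && ~~ exceeds (gedge n) (init n c) ps]|
   <= (m ^ T - (m - 1) ^ T) ^ m.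
Proof.
apply: (@leq_trans #|[pred ps : {ffun 'I_T -> {ffun 'I_n -> 'I_n}} | [pred g : {ffun 'I_n -> {ffun 'I_T -> 'I_n}} | [forall x, Gc x (g x)]] (tr ps)]|).
  apply: subset_leq_card; apply/subsetP => ps; rewrite !inE => /andP [hv hex].
  apply/forallP => x.
  have := validE ps; rewrite hv => /esym /forallP /(_ x) hG.
  rewrite /Gc /=; apply/andP; split; first exact: hG.
  apply/implyP => hx; have [i hi] := @bad_cov ps hv hex x hx.
  by apply/existsP; exists i; rewrite /tr !ffunE.
rewrite (card_tr [pred g : {ffun 'I_n -> {ffun 'I_T -> 'I_n}} | [forall x, Gc x (g x)]]) card_forall (eq_bigr _ (fun x _ => card_Gc x)) prod_cond //; lia.
Qed.

End G.

Lemma L1 A B k : B <= A -> (A - B) ^ k * (A + k * B) <= A ^ k.+1.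
Proof.
move=> hBA; elim: k => [|k IH]; first by rewrite expn0 mul1n mul0n addn0 expn1.
have h1 : (A - B) * (A + k.+1 * B) <= A * (A + k * B) by nia.
rewrite !expnS in IH *.
move: IH h1; set X := (A - B) ^ k; set Y := A ^ k => IH h1.
have := leq_mul (leqnn X) h1; have := leq_mul (leqnn A) IH.
nia.
Qed.

Lemma L2 m h : h <= m -> m ^ h * (m - h) <= m * (m - 1) ^ h.
Proof.
elim: h => [|h IH] hh; first by rewrite !expn0 mul1n muln1 subn0.
have IH' := IH (ltnW hh).
rewrite !expnS; move: IH'; set X := m ^ h; set Y := (m - 1) ^ h => IH'.
have := leq_mul (leqnn (m - 1)) IH'.
have : (m - h.+1) * m <= (m - 1) * (m - h) by nia.
move=> h2; have := leq_mul (leqnn X) h2.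
nia.
Qed.

Lemma L3 m h : 1 <= m -> h.*2 <= m -> m ^ h <= 2 * (m - 1) ^ h.
Proof.
move=> hm hh; have := @L2 m h ltac:(lia).
move: (m ^ h) ((m - 1) ^ h) => X Y H.
have : X * m <= 2 * (X * (m - h)) by nia.
nia.
Qed.

Lemma L4 m T : 2 <= m -> m ^ T <= 2 ^ (T %/ m./2).+1 * (m - 1) ^ T.
Proof.
move=> hm; set h := m./2; set j := T %/ h.
have hh : 0 < h by rewrite /h; lia.
have hTu : T <= j.+1 * h by apply: ltnW; apply: ltn_ceil.
have hu : m ^ (j.+1 * h) <= 2 ^ j.+1 * (m - 1) ^ (j.+1 * h).
  rewrite mulnC !expnM -expnMn leq_exp2r //; apply: L3; rewrite /h; [lia|].
  by rewrite -[X in _ <= X](odd_double_half m) leq_addl.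
have hpos : 0 < (m - 1) ^ (j.+1 * h - T) by rewrite expn_gt0; apply/orP; left; lia.
rewrite -(leq_pmul2r hpos) -mulnA -expnD subnKC //.
apply: leq_trans hu; rewrite -[X in _ <= m ^ X](subnKC hTu) expnD leq_mul2l; apply/orP; right.
by case: (j.+1 * h - T) => [|e]; rewrite ?expn0 // leq_exp2r // leq_subr.
Qed.

Lemma L5 m T bad tot P : 2 <= m -> bad <= (m ^ T - (m - 1) ^ T) ^ m -> tot = (m ^ T) ^ m ->
  m ^ T <= P * (m - 1) ^ T -> bad * m <= P * tot.
Proof.
move=> hm hb ht hP.
have hBA : (m - 1) ^ T <= m ^ T by case: T {hb ht hP} => [|e]; rewrite ?expn0 // leq_exp2r // leq_subr.
have h1 := @L1 (m ^ T) ((m - 1) ^ T) m hBA.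
have hBp : 0 < (m - 1) ^ T by rewrite expn_gt0; apply/orP; left; lia.
rewrite expnS -ht in h1.
move: hb h1 hP hBp; set X := (m ^ T - (m - 1) ^ T) ^ m; set A := m ^ T; set B := (m - 1) ^ T.
move=> hb h1 hP hBp.
have h4 := leq_mul hP (leqnn tot).
have h2 : X * m * B <= P * B * tot by nia.
have h3 : X * m <= P * tot by rewrite -(leq_pmul2r hBp); nia.
apply: leq_trans h3; by rewrite leq_mul2r hb orbT.
Qed.

Lemma ln_nonneg (x : R) : Rle 1 x -> Rle 0 (ln x).
Proof.
move=> h; destruct (Req_dec x 1) as [->|ne]; first by rewrite ln_1; apply: Rle_refl.
rewrite -ln_1; apply: Rlt_le; apply: ln_increasing; lra.
Qed.

Lemma thr_le n : (1 <= n)%N ->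
  Rle (INR (threshold n)) (Rdiv (Rmult (INR n) (Rdiv (ln (INR n)) (ln (INR 2)))) (INR 8)).
Proof.
move=> hn.
set x := Rdiv _ _.
have l2 : Rlt 0 (ln (INR 2)) by rewrite -ln_1; apply: ln_increasing; simpl; lra.
have hn1 : Rle 1 (INR n) by change (Rle (INR 1) (INR n)); apply: le_INR; apply/leP.
have x0 : Rle 0 x.
  rewrite /x /Rdiv; apply: Rmult_le_pos; last by simpl; lra.
  apply: Rmult_le_pos; first lra.
  apply: Rmult_le_pos; first exact: ln_nonneg.
  by apply: Rlt_le; apply: Rinv_0_lt_compat.
rewrite /threshold -/x.
case: (Z_le_gt_dec 0 (Int_part x)) => hz.
  rewrite INR_IZR_INZ Z2Nat.id //; exact: (proj1 (base_Int_part x)).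
have -> : Z.to_nat (Int_part x) = 0%N by lia.
exact: x0.
Qed.

Lemma INR_expn a k : INR (a ^ k) = pow (INR a) k.
Proof. by elim: k => [|k IH]; rewrite ?expn0 // expnS mult_INR IH. Qed.

Lemma jb n m : n = (m + m)%N -> (2 <= m)%N ->
  (16 ^ (threshold n %/ m./2) <= n ^ 3)%N.
Proof.
move=> hnm hm.
set T := threshold n; set j := T %/ m./2.
have hjm : (j * m <= 3 * T)%N.
  have h1 : (j * m./2 <= T)%N by apply: leq_divM.
  have h2 : (m <= 3 * m./2)%N by lia.
  have := leq_mul (leqnn j) h2; nia.
have hT := @thr_le n ltac:(lia).
have hjmR : Rle (Rmult (INR j) (INR m)) (Rmult (INR 3) (INR T)).
  rewrite -!mult_INR; apply: le_INR; exact/leP.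
have hnR : INR n = Rmult (INR 2) (INR m) by rewrite hnm plus_INR; simpl; lra.
have l2 : Rlt 0 (ln (INR 2)) by rewrite -ln_1; apply: ln_increasing; simpl; lra.
have hmR : Rlt 0 (INR m) by apply: lt_0_INR; apply/ltP; lia.
set L := ln (INR n) in hT.
rewrite -/T hnR in hT.
set l := ln (INR 2) in hT l2.
simpl (INR 8) in hT; simpl (INR 2) in hT; simpl (INR 3) in hjmR.
have key : Rle (Rmult (INR j) (Rmult (INR 4) l)) (Rmult (INR 3) L).
  have h1 : Rle (Rmult (INR j) (INR m)) (Rmult (INR m) (Rmult (Rdiv 3 4) (Rdiv L l))).
    apply: (Rle_trans _ _ _ hjmR).
    apply: (Rle_trans _ _ _ (Rmult_le_compat_l _ _ _ _ hT)); first lra.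
    apply: Req_le; field; lra.
  have h2 : Rle (INR j) (Rmult (Rdiv 3 4) (Rdiv L l)).
    apply: (Rmult_le_reg_l (INR m)) => //; lra.
  have h3 : Rmult (Rmult (Rdiv 3 4) (Rdiv L l)) l = Rmult (Rdiv 3 4) L by field; lra.
  have := Rmult_le_compat_r l _ _ (Rlt_le _ _ l2) h2; rewrite h3; simpl; lra.
apply/leP; apply: INR_le; rewrite !INR_expn.
have n0 : Rlt 0 (INR n) by rewrite hnR; simpl; lra.
have i16 : Rlt 0 (INR 16) by simpl; lra.
apply: Rnot_lt_le => hlt.
have := ln_increasing _ _ (pow_lt _ 3 n0) hlt.
rewrite !ln_pow //.
have -> : INR 16 = pow (INR 2) 4 by rewrite -INR_expn.
rewrite ln_pow; last by simpl; lra.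
rewrite -/L -/l; lra.
Qed.


Lemma arith1 K j n m : n = (m + m)%N -> (256 * K ^ 4 <= n)%N -> (16 ^ j <= n ^ 3)%N ->
  (K * 2 ^ j.+1 <= m)%N.
Proof.
move=> hnm hN hjb.
rewrite -(@leq_exp2r _ _ 4) //.
have e1 : ((K * 2 ^ j.+1) ^ 4 = K ^ 4 * 16 * 16 ^ j)%N.
  rewrite expnMn -mulnA; congr (_ * _); rewrite -expnM mulnC expnM expnS //.
have e2 : (n ^ 4 = 16 * m ^ 4)%N by rewrite hnm addnn -mul2n expnMn.
rewrite e1.
have h1 := leq_mul (leqnn (K ^ 4 * 16)) hjb.
have h2 := leq_mul hN (leqnn (n ^ 3)).
have e3 : (n ^ 4 = n * n ^ 3)%N by rewrite expnS.
move: h1 h2 e2 e3; move: (16 ^ j) (K ^ 4) (n ^ 3) (m ^ 4) (n ^ 4) => Q A N3 M4 N4.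
nia.
Qed.

Lemma arith2 bad tot P K m : (bad * m <= P * tot)%N -> (K * P <= m)%N -> (0 < m)%N -> (bad * K <= tot)%N.
Proof.
move=> h5 hKP hm.
rewrite -(leq_pmul2r hm).
have := leq_mul (leqnn tot) hKP.
have := leq_mul (leqnn K) h5.
nia.
Qed.

Theorem mainTheorem8 (c : color) (hc : colored c) :
  forall eps : R, Rlt 0 eps ->
  exists N : nat, forall n : nat,
    (4 <= n)%N -> ~~ odd n -> (N <= n)%N ->
    Rle (Rminus 1 eps) (prob_exceeds (gedge n) (init n c) (threshold n)).
Proof.
move=> eps he.
have [K hK] := INR_unbounded (Rinv eps).
exists (256 * K ^ 4)%N => n h4 hodd hN.
set m := n./2.
have hnm : n = (m + m)%N.
  by have := odd_double_half n; rewrite (negbTE hodd) add0n -addnn.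
have hm2 : (2 <= m)%N by lia.
have hn2 : (2 <= n)%N by lia.
set T := threshold n.
have hbad := @bad_card c hc n hn2 hnm T.
have htot := @total_card c hc n hn2 hnm T.
have hL4 := @L4 m T hm2.
have h5 := @L5 m T _ _ _ hm2 hbad htot hL4.
have hjb := @jb n m hnm hm2.
rewrite -/T in hjb.
move: h5 hjb htot; set j := T %/ m./2; set bad := #|_|; set tot := #|_| => h5 hjb htot.
have hK1 : (1 <= K)%N.
  case: K hK hN => [|k] //= hK _; exfalso.
  have := Rinv_0_lt_compat _ he; lra.
have hKP : (K * 2 ^ j.+1 <= m)%N by apply: (@arith1 K j n m).
have hbK : (bad * K <= tot)%N by apply: (@arith2 bad tot (2 ^ j.+1) K m) => //; lia.
have htot0 : (0 < tot)%N.
  rewrite htot !expn_gt0; apply/orP; left; apply/orP; left; rewrite -/m; lia.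
have hsplit : (#|[pred ps : {ffun 'I_T -> {ffun 'I_n -> 'I_n}} | valid_run (gedge n) ps && exceeds (gedge n) (init n c) ps]| + bad = tot)%N.
  have hc2 := cardID [pred ps : {ffun 'I_T -> {ffun 'I_n -> 'I_n}} | exceeds (gedge n) (init n c) ps]
    [pred ps : {ffun 'I_T -> {ffun 'I_n -> 'I_n}} | valid_run (gedge n) ps].
  apply: (etrans _ hc2).
  by congr (_ + _); apply: eq_card => ps; rewrite !inE // andbC.
rewrite /prob_exceeds -/T -/tot.
move: hsplit; set good := #|_| => hsplit.
have hgood : INR good = Rminus (INR tot) (INR bad) by rewrite -hsplit plus_INR; lra.
have htR : Rlt 0 (INR tot) by apply: lt_0_INR; apply/ltP.
have hbKR : Rle (Rmult (INR bad) (INR K)) (INR tot) by rewrite -mult_INR; apply: le_INR; apply/leP.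
have heK : Rlt 1 (Rmult eps (INR K)).
  have := Rmult_lt_compat_l eps _ _ he hK; rewrite Rinv_r; lra.
have hb0 : Rle 0 (INR bad) by apply: pos_INR.
have hb : Rle (INR bad) (Rmult eps (INR tot)).
  have := Rmult_le_compat_l _ _ _ hb0 (Rlt_le _ _ heK).
  have := Rmult_le_compat_l _ _ _ (Rlt_le _ _ he) hbKR.
  nra.
rewrite hgood.
apply: (Rmult_le_reg_r (INR tot)) => //.
have -> : Rmult (Rdiv (Rminus (INR tot) (INR bad)) (INR tot)) (INR tot) = Rminus (INR tot) (INR bad).
  by field; lra.
nra.
Qed.
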